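(* Let $M,N$ be matroids on a common set $E$ and $W:=W(M,N)$. Then every element of $B(M,N,W)$ is a nice feasible set (with respect to $(M,N)$).
   Context: Matroids are possibly infinite. $M^*$ dual, $M\upharpoonright X$ restriction, $M/X:=(M^*\upharpoonright(E\setminus X))^*$ (on $E\setminus X$), $M.X:=M/(E\setminus X)$. A loop is an element $e$ with $\{e\}$ dependent; $r(K)=0$ means the empty set is a base of $K$. $W$ is an $(M,N)$-wave if $M\upharpoonright W$ has a base independent in $N.W$; the union of all waves is a wave, denoted $W(M,N)$. $B(M,N,X)$ is the set of common bases of $M\upharpoonright X$ and $N.X$. $\mathsf{cond}(M,N)$: for every $(M,N)$-wave $W$, $N.W$ has an $M$-independent base. $\mathsf{cond}^+(M,N)$: $W(M,N)$ consists of $M$-loops and $r(N.W(M,N))=0$. A set $I$ independent in both $M$ and $N$ is feasible if $\mathsf{cond}(M/I,N/I)$ holds, and nice feasible if moreover $\mathsf{cond}^+(M/I,N/I)$ holds. *)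

(* Defs.v *)
Set Implicit Arguments.

Definition set (T : Type) := T -> Prop.

Section Sets.
Variable T : Type.
Definition subset (A B : set T) : Prop := forall x, A x -> B x.
Definition setI (A B : set T) : set T := fun x => A x /\ B x.
Definition setU (A B : set T) : set T := fun x => A x \/ B x.
Definition setD (A B : set T) : set T := fun x => A x /\ ~ B x.
Definition set0 : set T := fun _ => False.
Definition set1 (a : T) : set T := fun x => x = a.
End Sets.

Record matroid (T : Type) := Matroid {
  ground : set T;
  indep : set T -> Prop }.

Section Matroids.
Variable T : Type.
Implicit Types (M N : matroid T) (I J B X W : set T).

Definition base M B : Prop :=
  indep M B /\ forall J, indep M J -> subset B J -> subset J B.

(* Independence axioms for (possibly infinite) matroids
   (Bruhn, Diestel, Kriesell, Pendavingh, Wollan): (I1),(I2),(I3),(IM). *)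
Definition is_matroid M : Prop :=
  (forall I, indep M I -> subset I (ground M)) /\
  indep M (@set0 T) /\
  (forall I J, indep M J -> subset I J -> indep M I) /\
  (forall I B, indep M I -> ~ base M I -> base M B ->
     exists x, B x /\ ~ I x /\ indep M (setU I (set1 x))) /\
  (forall I X, indep M I -> subset I X -> subset X (ground M) ->
     exists J, indep M J /\ subset I J /\ subset J X /\
       (forall J', indep M J' -> subset J J' -> subset J' X -> subset J' J)).

Definition dual M : matroid T :=
  Matroid (ground M)
    (fun I => subset I (ground M) /\
       exists B, base M B /\ subset I (setD (ground M) B)).

Definition restrict M X : matroid T :=
  Matroid (setI X (ground M)) (fun I => indep M I /\ subset I X).

Definition contract M X : matroid T :=
  dual (restrict (dual M) (setD (ground M) X)).

Definition contract_to M X : matroid T :=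
  contract M (setD (ground M) X).

Definition loop M e : Prop := ground M e /\ ~ indep M (set1 e).

Definition rank_zero M : Prop := base M (@set0 T).

Definition wave M N W : Prop :=
  subset W (ground M) /\
  exists B, base (restrict M W) B /\ indep (contract_to N W) B.

Definition Wave M N : set T := fun x => exists W, wave M N W /\ W x.

Definition Bset M N X : set T -> Prop :=
  fun B => base (restrict M X) B /\ base (contract_to N X) B.

Definition cond M N : Prop :=
  forall W, wave M N W ->
    exists B, base (contract_to N W) B /\ indep M B.

Definition cond_plus M N : Prop :=
  (forall x, Wave M N x -> loop M x) /\
  rank_zero (contract_to N (Wave M N)).

Definition feasible M N I : Prop :=
  indep M I /\ indep N I /\ cond (contract M I) (contract N I).

Definition nice_feasible M N I : Prop :=
  feasible M N I /\ cond_plus (contract M I) (contract N I).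

End Matroids.

(* Main.v *)
Require Import Defs.
From Stdlib Require Import Classical.

Section S.
Variable T : Type.
Implicit Types (K M N : matroid T) (I J L B C X Y Z W : set T).

Ltac us := unfold subset, setU, setD, setI, set1, set0 in *.

Lemma ind_sub K I J : is_matroid K -> indep K J -> subset I J -> indep K I.
Proof. intros [_ [_ [H _]]] ? ?; eauto. Qed.

Lemma ind_ground K I : is_matroid K -> indep K I -> subset I (ground K).
Proof. intros [H _]; eauto. Qed.

Lemma extend_base_restrict K L0 X : is_matroid K -> indep K L0 -> subset L0 X ->
  exists L, base (restrict K X) L /\ subset L0 L.
Proof.
  intros HK H0 HX. pose proof HK as [Hg [_ [_ [_ IM]]]].
  destruct (IM L0 (setI X (ground K)) H0) as [L [HL [HL0 [HLX Hmax]]]].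
  { us; intros x Hx; split; eauto. }
  { us; intros x [? ?]; auto. }
  exists L; split; auto.
  split. split; auto. us; intros x Hx; apply HLX; auto.
  intros J' [HJ' HJX] HLJ. apply Hmax; auto.
  us; intros x Hx; split; auto. eapply Hg; eauto.
Qed.

Lemma exists_base_restrict K X : is_matroid K -> exists L, base (restrict K X) L.
Proof.
  intros HK. destruct (extend_base_restrict K (@set0 T) X HK) as [L [? ?]].
  - apply HK. - us; tauto. - eauto.
Qed.

Lemma extend_base K J : is_matroid K -> indep K J -> exists B, base K B /\ subset J B.
Proof.
  intros HK HJ. pose proof HK as [Hg [_ [_ [_ IM]]]].
  destruct (IM J (ground K) HJ) as [L [HL [HJL [HLE Hmax]]]].
  { eapply Hg; eauto. } { us; auto. }
  exists L; split; [split; [auto|] | auto]. intros J' HJ' HLJ'.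
  apply Hmax; auto; eapply Hg; eauto.
Qed.


Lemma G_ac K X J L2 : is_matroid K -> indep (contract K X) J ->
  base (restrict K X) L2 -> indep K (setU J L2).
Proof.
  intros HK HJ [[HL2 HL2X] HL2max].
  pose proof HK as [Hg [_ [Hsub [I3 IM]]]].
  unfold contract, dual, restrict in HJ; simpl in HJ.
  destruct HJ as [HJg [C [[[[HCE [B [HB HCB]]] HCX] HCmax] HJC]]].
  simpl in HCmax, HL2max.
  pose proof HB as [HBi HBmax].
  set (Z := setU L2 (setD B X)).
  destruct (IM L2 Z HL2) as [L' [HL' [HL2L' [HL'Z HL'max]]]].
  { subst Z; us; auto. }
  { subst Z; us; intros x [Hx|[Hx _]]; [apply (Hg L2)|apply (Hg B)]; auto. }
  assert (HL'b : base K L').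
  { apply NNPP; intro Hnb.
    destruct (I3 L' B HL' Hnb HB) as [x [HBx [HL'x Hind]]].
    destruct (classic (X x)) as [HXx|HXx].
    - assert (HL2x : subset (setU L2 (set1 x)) L2).
      { apply HL2max.
        - split. eapply Hsub; [exact Hind|]. us; intros y [Hy|Hy]; auto.
          us; intros y [Hy|Hy]; auto. subst; auto.
        - us; auto. }
      apply HL'x, HL2L', HL2x. us; auto.
    - apply HL'x. apply (HL'max (setU L' (set1 x))); auto.
      + us; auto.
      + subst Z; us; intros y [Hy|Hy]; auto. subst y. right; auto.
      + us; auto. }
  assert (HBL' : forall y, B y -> ~ X y -> L' y).
  { intros y HBy HXy. apply NNPP; intro HL'y.
    assert (HCy : subset (setU C (set1 y)) C).
    { apply HCmax.
      - split; [split|].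
        + us; intros z [Hz|Hz]; [apply HCE; auto| subst; apply (Hg B); auto].
        + exists L'; split; auto. us; intros z [Hz|Hz].
          * split; [apply HCE; auto|]. intro HL'z.
            destruct (HL'Z z HL'z) as [Hz2|[Hz2 Hz3]].
            -- apply (HCX z Hz). apply HL2X; auto.
            -- apply (HCB z Hz). auto.
          * subst z. split; [apply (Hg B); auto|]. auto.
        + us; intros z [Hz|Hz]; [apply HCX; auto| subst; split; [apply (Hg B); auto|auto]].
      - us; auto. }
    apply (HCB y); [apply HCy; us; auto| auto]. }
  eapply Hsub; [exact HL'|].
  us; intros x [Hx|Hx]; auto.
  destruct (HJg x Hx) as [[HEx HXx] _].
  apply HBL'; auto.
  apply NNPP; intro HBx.
  assert (HCx : subset (setU C (set1 x)) C).
  { refine (HCmax (setU C (set1 x)) _ _).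
    - split; [split|].
      + us; intros z [Hz|Hz]; [apply HCE; auto| subst; auto].
      + exists B; split; auto. us; intros z [Hz|Hz]; [apply HCB; auto| subst; auto].
      + us; intros z [Hz|Hz]; [apply HCX; auto| subst; auto].
    - us; auto. }
  apply (HJC x Hx). apply HCx. us; auto.
Qed.


Lemma G_ba K X J L : is_matroid K -> subset J (setD (ground K) X) ->
  base (restrict K X) L -> indep K (setU J L) -> indep (contract K X) J.
Proof.
  intros HK HJX [[HL HLX] HLmax] HJL. simpl in HLmax.
  pose proof HK as [Hg [_ [Hsub [I3 IM]]]].
  destruct (extend_base K _ HK HJL) as [B [HB HJLB]].
  pose proof HB as [HBi HBmax].
  unfold contract, dual, restrict; simpl. split.
  { us; intros x Hx; destruct (HJX x Hx); auto. }
  exists (fun x => ground K x /\ ~ X x /\ ~ B x). split.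
  - split.
    + split; [split|].
      * us; intros x [? ?]; auto.
      * exists B; split; auto. us; intros x [? [? ?]]; auto.
      * us; intros x [? [? ?]]; auto.
    + intros C' [[HC'E [B' [HB' HC'B']]] HC'X] HCC' y Hy.
      destruct (HC'X y Hy) as [HEy HXy].
      split; [auto|split;[auto|]]. intro HBy.
      set (Z := fun x => (X x /\ ground K x) \/ (B x /\ ~ X x /\ x <> y)).
      set (B0 := fun x => B x /\ x <> y).
      assert (HB'Z : subset B' Z).
      { intros b Hb. pose proof HB' as [HB'i _].
        destruct (classic (X b)) as [HXb|HXb].
        - left; split; auto. apply (Hg B'); auto.
        - right. split; [|split; auto].
          + apply NNPP; intro HnB.
            assert (HC'b : C' b). { apply HCC'. split; [apply (Hg B'); auto| auto]. }
            apply (HC'B' b HC'b); auto.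
          + intro Heq; subst b. apply (HC'B' y Hy); auto. }
      destruct (IM B0 Z) as [L' [HL' [HB0L' [HL'Z HL'max]]]].
      { apply (Hsub B0 B); auto. intros x [? ?]; auto. }
      { intros x [Hx Hxy]. destruct (classic (X x)).
        - left; split; auto. apply (Hg B); auto.
        - right; auto. }
      { intros x [[? ?]|[? _]]; auto. apply (Hg B); auto. }
      assert (HL'b : base K L').
      { apply NNPP; intro Hnb.
        destruct (I3 L' B' HL' Hnb HB') as [x [HB'x [HL'x Hind]]].
        apply HL'x. refine (HL'max (setU L' (set1 x)) Hind _ _ x _).
        - us; auto.
        - us; intros z [Hz|Hz]; auto. subst z; auto.
        - us; auto. }
      assert (HL'B0 : subset L' B0).
      { intros x HL'x. destruct (classic (X x)) as [HXx|HXx].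
        - assert (HLx : L x).
          { refine (HLmax (fun z => L' z /\ X z) _ _ x _).
            + split. apply (Hsub _ L'); auto. intros z [? ?]; auto.
              intros z [? ?]; auto.
            + intros z Hz. split; [|auto]. apply HB0L'. split.
              * apply HJLB. us; auto.
              * intro Heq; subst z. apply HXy; auto.
            + split; auto. }
          split. apply HJLB; us; auto. intro Heq; subst x; auto.
        - destruct (HL'Z x HL'x) as [[? ?]|[? [? ?]]]. contradiction. split; auto. }
      destruct HL'b as [_ HL'bmax].
      assert (HBL' : subset B L').
      { apply HL'bmax; auto. intros x Hx; apply HL'B0 in Hx; destruct Hx; auto. }
      destruct (HL'B0 y (HBL' y HBy)) as [_ Hne]. apply Hne; auto.
  - us; intros x Hx. destruct (HJX x Hx) as [HEx HXx].
    split; [split; [split|]; auto|]. intros [_ [_ HnB]]. apply HnB, HJLB. auto.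
Qed.


Lemma ground_contract K X : ground (contract K X) = setI (setD (ground K) X) (ground K).
Proof. reflexivity. Qed.

Lemma contract_sub K X J : indep (contract K X) J -> subset J (setD (ground K) X).
Proof. unfold contract, dual, restrict; simpl. intros [H _]. us; intros x Hx; apply H; auto. Qed.

Lemma base_restrict_self K I : indep K I -> base (restrict K I) I.
Proof. intros HI. split. split; us; auto. simpl. intros J [_ HJ] _; auto. Qed.

Lemma H1 K I J : is_matroid K -> indep K I -> indep (contract K I) J -> indep K (setU J I).
Proof. intros HK HI HJ. eapply G_ac; eauto. apply base_restrict_self; auto. Qed.

Lemma H2 K I J : is_matroid K -> indep K I -> subset J (setD (ground K) I) ->
  indep K (setU J I) -> indep (contract K I) J.
Proof. intros HK HI HJ HJI. eapply G_ba; eauto. apply base_restrict_self; auto. Qed.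

Lemma H3 K I : is_matroid K -> indep K I -> is_matroid (contract K I).
Proof.
  intros HK HI. pose proof HK as [Hg [H0 [Hsub [I3 IM]]]].
  assert (Hc : forall J, indep (contract K I) J <->
     subset J (setD (ground K) I) /\ indep K (setU J I)).
  { intros J; split.
    - intros HJ; split; [apply contract_sub; auto| apply H1; auto].
    - intros [? ?]; apply H2; auto. }
  assert (HbK : forall B, base (contract K I) B -> base K (setU B I)).
  { intros B [HB HBmax]. apply Hc in HB as [HBE HBI]. split; auto.
    intros L HL HBL.
    assert (H' : subset (fun x => L x /\ ~ I x) B).
    { apply HBmax.
      - apply Hc. split.
        + intros x [Hx HIx]. split; auto. apply (Hg L); auto.
        + apply (Hsub _ L); auto. us; intros x [[? ?]|?]; auto.
      - intros x Hx. split. apply HBL; us; auto. apply HBE; auto. }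
    us; intros x Hx. destruct (classic (I x)); auto. }
  split; [|split; [|split; [|split]]].
  - intros J HJ. rewrite ground_contract. apply Hc in HJ as [HJ _].
    us; intros x Hx; destruct (HJ x Hx); auto.
  - apply Hc. split. us; tauto. apply (Hsub _ I); auto. us; intros x [[]|?]; auto.
  - intros J J' HJ' HJJ'. apply Hc in HJ' as [HJ'E HJ'I]. apply Hc. split.
    + intros x Hx; auto.
    + apply (Hsub _ _ HJ'I). us; intros x [?|?]; auto.
  - intros J B HJ Hnb HB. pose proof HJ as HJ'. apply Hc in HJ' as [HJE HJI].
    assert (Hnb' : ~ base K (setU J I)).
    { intros [_ Hmax]. apply Hnb. split; auto. intros J' HJ' HJJ' x Hx.
      apply Hc in HJ' as [HJ'E HJ'I].
      destruct (Hmax _ HJ'I) with x as [?|HIx]; auto.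
      + us; intros y [?|?]; auto.
      + us; auto.
      + destruct (HJ'E x Hx); contradiction. }
    pose proof (HbK B HB) as HBK.
    destruct (I3 _ _ HJI Hnb' HBK) as [x [HBx [HJx Hind]]].
    assert (HxB : B x).
    { destruct HBx as [?|HIx]; auto. exfalso; apply HJx; right; auto. }
    exists x. split; auto. split. intro; apply HJx; left; auto.
    apply Hc. split.
    + us; intros y [Hy|Hy]; auto. subst y. destruct HB as [HB _].
      apply Hc in HB as [HBE _]. apply HBE; auto.
    + apply (Hsub _ _ Hind). us; intros y [[?|?]|?]; auto.
  - intros J X HJ HJX HXE. rewrite ground_contract in HXE.
    apply Hc in HJ as [HJE HJI].
    destruct (IM (setU J I) (setU X I) HJI) as [L [HL [HJL [HLX Hmax]]]].
    { us; intros x [?|?]; auto. }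
    { us; intros x [Hx|Hx]. destruct (HXE x Hx) as [[? ?] ?]; auto. apply (Hg I); auto. }
    exists (fun x => L x /\ ~ I x). split; [|split; [|split]].
    + apply Hc. split.
      * intros x [? ?]; split; auto. apply (Hg L); auto.
      * apply (Hsub _ L); auto. us; intros x [[? ?]|?]; auto.
    + intros x Hx. split. apply HJL; us; auto. apply HJE; auto.
    + intros x [HLx HIx]. destruct (HLX x HLx); auto; contradiction.
    + intros J' HJ' HLJ' HJ'X. apply Hc in HJ' as [HJ'E HJ'I].
      assert (HS : subset (setU J' I) L).
      { apply Hmax; auto.
        - us; intros x Hx. destruct (classic (I x)); auto.
        - us; intros x [?|?]; auto. }
      intros x Hx. split. apply HS; us; auto. apply HJ'E; auto.
Qed.


Lemma main_aux M N : is_matroid M -> is_matroid N -> ground M = ground N ->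
  forall I, Bset M N (Wave M N) I -> nice_feasible M N I.
Proof.
  intros HM HN HE I [HIM HIN].
  set (W := Wave M N) in *.
  pose proof HM as [HgM [H0M [HsubM _]]].
  pose proof HN as [HgN [H0N [HsubN _]]].
  destruct HIM as [[HIMi HIW] HIMmax]; simpl in HIMmax.
  destruct HIN as [HINi HINmax].
  unfold contract_to in HINi, HINmax.
  assert (HWE : subset W (ground N)).
  { intros x [W0 [[HW0 _] Hx]]. rewrite <- HE; auto. }
  assert (FN : forall L, base (restrict N (setD (ground N) W)) L -> indep N (setU I L)).
  { intros L HL. apply (G_ac N _ I L HN HINi HL). }
  assert (HINd : indep N I).
  { destruct (exists_base_restrict N (setD (ground N) W) HN) as [L HL].
    apply (HsubN _ _ (FN L HL)). us; auto. }
  assert (L0fact : forall L0, base (restrict N (setD (ground N) W)) L0 -> indep (contract N I) L0).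
  { intros L0 HL0. apply H2; auto.
    - destruct HL0 as [[_ HL0W] _]. intros x Hx. destruct (HL0W x Hx) as [? HnW].
      split; auto.
    - apply (HsubN _ _ (FN L0 HL0)). us; intros x [?|?]; auto. }
  assert (HNI : is_matroid (contract N I)) by (apply H3; auto).
  assert (HMI : is_matroid (contract M I)) by (apply H3; auto).
  assert (LemR : forall U, subset U W -> rank_zero (contract_to (contract N I) U)).
  { intros U HUW. unfold rank_zero, contract_to.
    set (X' := setD (ground (contract N I)) U).
    destruct (exists_base_restrict N (setD (ground N) W) HN) as [L0 HL0].
    destruct (extend_base_restrict (contract N I) L0 X' HNI (L0fact L0 HL0)) as [L' [HL' HL0L']].
    { destruct HL0 as [[_ HL0W] _]. intros x Hx. destruct (HL0W x Hx) as [HEx HnW].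
      subst X'. rewrite ground_contract. split; [split; [split|]|]; auto. }
    split.
    - apply (G_ba _ _ _ L' HNI); auto. us; tauto.
      destruct HL' as [[HL'i _] _]. apply (proj1 (proj2 (proj2 HNI)) _ _ HL'i). us; intros x [[]|?]; auto.
    - intros J HJ _ j Hj. exfalso.
      pose proof (contract_sub _ _ _ HJ j Hj) as [Hgj HXj].
      assert (HUj : U j). { apply NNPP; intro HnU. apply HXj. split; auto. }
      rewrite ground_contract in Hgj. destruct Hgj as [[HEj HnIj] _].
      pose proof (G_ac _ _ _ _ HNI HJ HL') as HJL'.
      pose proof (H1 _ _ _ HN HINd HJL') as HJL'I.
      assert (Hnew : indep (contract N (setD (ground N) W)) (setU I (set1 j))).
      { apply (G_ba _ _ _ L0 HN); auto.
        - us; intros x [Hx|Hx].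
          + split. apply (HgN I); auto. intros [_ Hc]; apply Hc; auto.
          + subst x. split; auto. intros [_ Hc]; apply Hc; auto.
        - apply (HsubN _ _ HJL'I). us; intros x [[Hx|Hx]|Hx]; auto. subst; auto. }
      apply HnIj. refine (HINmax _ Hnew _ j _); us; auto. }
  assert (LemP : forall W', wave (contract M I) (contract N I) W' -> subset W' W).
  { intros W' [HW'g [B' [HB' HB'N]]] x Hx. exists (setU W W'). split; [|right; auto].
    rewrite ground_contract in HW'g.
    split.
    - us; intros y [Hy|Hy]. rewrite HE; auto. destruct (HW'g y Hy) as [_ ?]; auto.
    - exists (setU I B').
      destruct HB' as [[HB'i HB'W'] HB'max]. simpl in HB'max.
      pose proof (H1 _ _ _ HM HIMi HB'i) as HB'M.
      pose proof (contract_sub _ _ _ HB'i) as HB'E.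
      split.
      + split. split.
        * apply (HsubM _ _ HB'M). us; intros y [?|?]; auto.
        * us; intros y [?|?]; auto.
        * simpl. intros L [HL HLWW'] HIBL y Hy.
          assert (Hcase : W y -> setU I B' y).
          { intros HWy. left. refine (HIMmax (setU I (set1 y)) _ _ y _).
            - split. apply (HsubM _ _ HL). us; intros z [Hz|Hz]; [apply HIBL; left; auto|subst; auto].
              us; intros z [Hz|Hz]; [auto|subst; auto].
            - us; auto.
            - right; reflexivity. }
          destruct (HLWW' y Hy) as [HWy|HW'y]; auto.
          destruct (classic (W y)) as [HWy|HnWy]; auto.
          right. refine (HB'max (setU B' (set1 y)) _ _ y _).
          -- simpl. split.
             ++ apply H2; auto.
                ** us; intros z [Hz|Hz]. apply HB'E; auto. subst z. destruct (HW'g y HW'y); auto.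
                ** apply (HsubM _ _ HL). us; intros z [[Hz|Hz]|Hz]; [apply HIBL; right; auto | subst; auto | apply HIBL; left; auto].
             ++ us; intros z [Hz|Hz]; auto. subst; auto.
          -- us; auto.
          -- right; reflexivity.
      + unfold contract_to.
        destruct (exists_base_restrict N (setD (ground N) (setU W W')) HN) as [L0 HL0].
        pose proof HL0 as [[HL0i HL0X] _].
        destruct (extend_base_restrict N L0 (setD (ground N) W) HN HL0i) as [L1 [HL1 HL0L1]].
        { intros y Hy. destruct (HL0X y Hy) as [? Hn]. split; auto. intro; apply Hn; left; auto. }
        assert (HL0NI : indep (contract N I) L0).
        { apply H2; auto.
          - intros y Hy. destruct (HL0X y Hy) as [? Hn]. split; auto. intro; apply Hn; left; auto.
          - apply (HsubN _ _ (FN L1 HL1)). us; intros y [?|?]; auto. }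
        set (X' := setD (ground (contract N I)) W').
        destruct (extend_base_restrict (contract N I) L0 X' HNI HL0NI) as [L' [HL' HL0L']].
        { intros y Hy. destruct (HL0X y Hy) as [HEy Hn]. subst X'. rewrite ground_contract.
          split; [split; [split|]|]; auto.
          - intro; apply Hn; left; auto.
          - intro Hc; apply Hn; right; auto. }
        pose proof (G_ac _ _ _ _ HNI HB'N HL') as HB'L'.
        pose proof (H1 _ _ _ HN HINd HB'L') as HB'L'I.
        apply (G_ba _ _ _ L0 HN); auto.
        * us; intros y [Hy|Hy].
          -- split. apply (HgN I); auto. intros [_ Hc]; apply Hc; left; auto.
          -- destruct (HB'E y Hy) as [HEy _]. rewrite <- HE. split; auto.
             intros [_ Hc]; apply Hc; right; auto.
        * apply (HsubN _ _ HB'L'I). us; intros y [[Hy|Hy]|Hy]; auto. }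
  unfold nice_feasible, feasible, cond, cond_plus.
  split; [split; [auto | split; [auto|]] | split].
  - intros W' HW'. exists (@set0 T). split.
    + apply LemR, LemP; auto.
    + apply HMI.
  - intros x [W'' [HW'' Hx]]. pose proof HW'' as [HW''g _].
    pose proof (HW''g x Hx) as Hgx. split; auto. intro Hind.
    rewrite ground_contract in Hgx. destruct Hgx as [[_ HnIx] _].
    apply HnIx. pose proof (H1 _ _ _ HM HIMi Hind) as HxI.
    refine (HIMmax _ _ _ x _).
    + split. exact HxI. us; intros z [Hz|Hz]; auto. subst z. apply (LemP W''); auto.
    + us; auto.
    + us; auto.
  - apply LemR. intros x [W'' [HW'' Hx]]. apply (LemP W''); auto.
Qed.

End S.

Theorem mainTheorem8 (T : Type) (M N : matroid T) :
  is_matroid M -> is_matroid N -> ground M = ground N ->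
  forall I : set T, Bset M N (Wave M N) I -> nice_feasible M N I.
Proof. intros. apply main_aux; auto. Qed.
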